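(* Let $C_t\subseteq\mathbb{R}^d$, $t=1,2,\dots$, be closed convex sets and $\ell_t:\mathbb{R}^d\to\mathbb{R}$ convex losses, with $g_t$ a subgradient selection of $\ell_t$ used by the algorithm. Suppose that for each $t$: $\ell_t$ is $L$-Lipschitz, $\ell_t$ is $(h_t,0)$-restorative, and the pair $(\ell_t,C_t)$ satisfies inward flow. Then the hidden iterates of lazy gradient descent with learning rate $\eta>0$ satisfy, for every $T\ge1$, $$\|\tilde\theta_{T+1}\|_2\le\sqrt{\|\tilde\theta_1\|_2^2+\eta^2L^2T+2\eta L\sum_{t=1}^T h_t}.$$ If moreover $(h_t)$ is nondecreasing, then $$\Bigg\|\frac1T\sum_{t=1}^T g_t(\theta_t)\Bigg\|_2\le\frac{2\|\tilde\theta_1\|_2}{\eta T}+\sqrt{\frac{L^2}{T}+\frac{2Lh_T}{\eta T}},$$ which tends to $0$ as $T\to\infty$ whenever $h_t$ is sublinear in $t$.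
   Context: Lazy gradient descent: given $\tilde\theta_1\in C_1$ and $\eta>0$, for $t=1,2,\dots$ set $\theta_t=\Pi_{C_t}(\tilde\theta_t)$ (Euclidean projection) and $\tilde\theta_{t+1}=\tilde\theta_t-\eta g_t(\theta_t)$. A loss $\ell$ is $L$-Lipschitz if all its subgradients $g$ satisfy $\|g(\theta)\|_2\le L$ for all $\theta$. For $h\ge0$ and a nonnegative function $\phi$, $\ell$ is $(h,\phi)$-restorative if all its subgradients $g$ satisfy $\langle\theta,g(\theta)\rangle\ge\phi(\theta)$ whenever $\|\theta\|_2>h$. A pair $(\ell,C)$ with $C$ closed convex and $g$ the (sub)gradient of $\ell$ satisfies inward flow if $-g(\theta)\in T_C(\theta)$ for all $\theta$ on the boundary of $C$, where $T_C(x)=\mathrm{cl}\{y:\exists\beta>0\text{ with }x+\varepsilon y\in C\ \forall\varepsilon\in[0,\beta]\}$ is the tangent cone. *)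

(* Defs.v *)
From HB Require Import structures.
From mathcomp Require Import all_boot all_order all_algebra.
From mathcomp Require Import all_classical all_reals all_analysis.
Set Implicit Arguments. Unset Strict Implicit. Unset Printing Implicit Defensive.
Import Order.TTheory GRing.Theory Num.Theory.
Import numFieldNormedType.Exports.
Local Open Scope classical_set_scope.
Local Open Scope ring_scope.

(* Vectors of R^d are row vectors 'rV[R]_d, with the (product) topology of
   mathcomp-analysis, which coincides with the Euclidean topology. *)
Section Defs.
Variables (R : realType) (d : nat).
Notation V := 'rV[R]_d.

Definition dotp (u v : V) : R := \sum_(i < d) u ord0 i * v ord0 i.
Definition norm2 (u : V) : R := Num.sqrt (dotp u u).

Definition convex_fun (f : V -> R) : Prop :=
  forall x y a, 0 <= a -> a <= 1 -> f (a *: x + (1 - a) *: y) <= a * f x + (1 - a) * f y.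

Definition is_subgradient (f : V -> R) (x v : V) : Prop :=
  forall y, f x + dotp v (y - x) <= f y.

Definition subgradient_selection (f : V -> R) (g : V -> V) : Prop :=
  forall x, is_subgradient f x (g x).

Definition lipschitz_loss (f : V -> R) (L : R) : Prop :=
  forall x v, is_subgradient f x v -> norm2 v <= L.

Definition restorative (f : V -> R) (h : R) (phi : V -> R) : Prop :=
  forall x v, is_subgradient f x v -> h < norm2 x -> phi x <= dotp x v.

Definition tangent_cone (C : set V) (x : V) : set V :=
  closure [set y | exists2 beta : R, 0 < beta &
            forall eps : R, 0 <= eps -> eps <= beta -> C (x + eps *: y)].

Definition boundary (C : set V) : set V := closure C `\` interior C.

(* inward flow for (f, C), with g the (sub)gradient of f *)
Definition inward_flow (g : V -> V) (C : set V) : Prop :=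
  forall x, boundary C x -> tangent_cone C x (- g x).

Definition is_projection (C : set V) (x p : V) : Prop :=
  C p /\ forall y, C y -> norm2 (x - p) <= norm2 (x - y).

End Defs.

(* Main.v *)
Require Import Defs.
From HB Require Import structures.
From mathcomp Require Import all_boot all_order all_algebra.
From mathcomp Require Import all_classical all_reals all_analysis.
From mathcomp Require Import ring lra.
Import Order.TTheory GRing.Theory Num.Theory.
Import numFieldNormedType.Exports.
Local Open Scope classical_set_scope.
Local Open Scope ring_scope.
Set Implicit Arguments. Unset Strict Implicit.

Section Aux.
Variables (R : realType) (d : nat).
Notation V := 'rV[R]_d.
Implicit Types u v w : V.

Lemma dotpC u v : dotp u v = dotp v u.
Proof. by apply: eq_bigr => i _; rewrite mulrC. Qed.

Lemma dotpDl u w v : dotp (u + w) v = dotp u v + dotp w v.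
Proof. by rewrite /dotp -big_split; apply: eq_bigr => i _; rewrite mxE mulrDl. Qed.

Lemma dotpZl a u v : dotp (a *: u) v = a * dotp u v.
Proof. by rewrite /dotp mulr_sumr; apply: eq_bigr => i _; rewrite mxE mulrA. Qed.

Lemma dotpNl u v : dotp (- u) v = - dotp u v.
Proof. by rewrite -scaleN1r dotpZl mulN1r. Qed.

Lemma dotpBl u w v : dotp (u - w) v = dotp u v - dotp w v.
Proof. by rewrite dotpDl dotpNl. Qed.

Lemma dotpDr u v w : dotp u (v + w) = dotp u v + dotp u w.
Proof. by rewrite dotpC dotpDl !(dotpC u). Qed.

Lemma dotpZr a u v : dotp u (a *: v) = a * dotp u v.
Proof. by rewrite dotpC dotpZl dotpC. Qed.

Lemma dotpNr u v : dotp u (- v) = - dotp u v.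
Proof. by rewrite dotpC dotpNl dotpC. Qed.

Lemma dotpBr u v w : dotp u (v - w) = dotp u v - dotp u w.
Proof. by rewrite dotpDr dotpNr. Qed.

Lemma dotp0l v : dotp 0 v = 0.
Proof. by rewrite -(scale0r 0) dotpZl mul0r. Qed.

Lemma dotp_ge0 u : 0 <= dotp u u.
Proof. by apply: sumr_ge0 => i _; rewrite -expr2 sqr_ge0. Qed.

Lemma dotp_eq0 u : dotp u u = 0 -> u = 0.
Proof.
move=> /eqP; rewrite psumr_eq0; last by move=> i _; rewrite -expr2 sqr_ge0.
move=> /allP H; apply/matrixP => i j; rewrite mxE (ord1 i).
have /H : j \in index_enum 'I_d by rewrite mem_index_enum.
by rewrite /= mulf_eq0 orbb => /eqP.
Qed.

Lemma norm2_ge0 u : 0 <= norm2 u.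
Proof. exact: sqrtr_ge0. Qed.

Lemma norm2_sq u : norm2 u ^+ 2 = dotp u u.
Proof. by rewrite sqr_sqrtr // dotp_ge0. Qed.

Lemma norm2_le u v : norm2 u <= norm2 v -> dotp u u <= dotp v v.
Proof. by rewrite /norm2 ler_sqrt // dotp_ge0. Qed.

Lemma norm2Z a u : norm2 (a *: u) = `|a| * norm2 u.
Proof.
by rewrite /norm2 dotpZl dotpZr mulrA -expr2 sqrtrM ?sqr_ge0 // sqrtr_sqr.
Qed.

Lemma CS u v : - (norm2 u * norm2 v) <= dotp u v.
Proof.
set x := norm2 u; set y := norm2 v.
have [x0|xpos] := eqVneq x 0.
  have : dotp u u = 0 by rewrite -norm2_sq -/x x0 expr0n.
  by move/dotp_eq0 => ->; rewrite dotp0l x0 mul0r oppr0.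
have [y0|ypos] := eqVneq y 0.
  have : dotp v v = 0 by rewrite -norm2_sq -/y y0 expr0n.
  by move/dotp_eq0 => ->; rewrite dotpC dotp0l y0 mulr0 oppr0.
have hx : 0 < x by rewrite lt_def xpos norm2_ge0.
have hy : 0 < y by rewrite lt_def ypos norm2_ge0.
have := dotp_ge0 (y *: u + x *: v).
rewrite !(dotpDl, dotpDr, dotpZl, dotpZr) -!norm2_sq -/x -/y (dotpC v u) => H.
have hxy : 0 < x * y by rewrite mulr_gt0.
rewrite -(@ler_pM2l _ (2 * (x * y))); last by rewrite mulr_gt0.
nra.
Qed.

Lemma norm2_tri u v : norm2 (u - v) <= norm2 u + norm2 v.
Proof.
rewrite -(@ler_pXn2r _ 2) ?nnegrE ?addr_ge0 ?norm2_ge0 //.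
rewrite norm2_sq dotpBl !dotpBr -!norm2_sq (dotpC v u).
have := CS u v; nra.
Qed.


Lemma dotp_expand u v a :
  dotp (u - a *: v) (u - a *: v) = dotp u u - 2 * a * dotp u v + a ^+ 2 * dotp v v.
Proof.
rewrite !(dotpBl, dotpBr, dotpZl, dotpZr) (dotpC v u); ring.
Qed.

Lemma dotp_continuous n : continuous (fun y : V => dotp n y).
Proof.
rewrite /dotp; elim: (index_enum 'I_d) => [|i r IH].
  have -> : (fun y : V => \sum_(i <- [::]) n ord0 i * y ord0 i) = fun _ => 0.
    by apply: funext => y; rewrite big_nil.
  exact: cst_continuous.
have -> : (fun y : V => \sum_(j <- i :: r) n ord0 j * y ord0 j) =
   (fun y : V => n ord0 i * y ord0 i) + (fun y => \sum_(j <- r) n ord0 j * y ord0 j).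
  by apply: funext => y; rewrite big_cons.
move=> y; apply: continuousD; last exact: IH.
apply: continuousM; first exact: cst_continuous.
exact: coord_continuous.
Qed.

Lemma normal_nonneg (C : set V) x p gv :
  is_projection C x p -> (boundary C p -> tangent_cone C p (- gv)) ->
  0 <= dotp (x - p) gv.
Proof.
move=> [Cp Hp] Hin; set n := x - p.
have [n0|nn0] := eqVneq n 0; first by rewrite n0 dotp0l.
have npos : 0 < norm2 n.
  rewrite lt_def norm2_ge0 andbT; apply/eqP => H.
  by move/eqP: nn0; apply; apply: dotp_eq0; rewrite -norm2_sq H expr0n.
have Hb : boundary C p.
  split; first exact: subset_closure.
  move=> /= /nbhs_ballP [r r0 Hr]; have r0p : 0 < r := r0.
  set e := r / (2 * (`|n| + r)).
  have Dpos : 0 < `|n| + r by rewrite ltr_wpDl.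
  have e0 : 0 < e by rewrite divr_gt0 // mulr_gt0.
  have e1 : e < 1.
    rewrite ltr_pdivrMr ?mulr_gt0 // mul1r.
    have := normr_ge0 n; lra.
  have : C (p + e *: n).
    apply: Hr; rewrite -ball_normE /ball_ /= opprD addrA subrr sub0r normrN.
    rewrite normrZ gtr0_norm //.
    rewrite /e mulrAC ltr_pdivrMr ?mulr_gt0 //.
    have := normr_ge0 n; nra.
  move/Hp; rewrite (_ : x - (p + e *: n) = (1 - e) *: n); last first.
    by rewrite scalerBl scale1r /n opprD addrA.
  rewrite norm2Z ger0_norm; last lra.
  nra.
have := Hin Hb; rewrite /tangent_cone.
set F := [set y | _].
have sub : F `<=` [set y | dotp n y <= 0].
  move=> y [beta beta0 HB].
  rewrite /= leNgt; apply/negP => cpos.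
  set c := dotp n y.
  set e := Order.min beta (c / (dotp y y + 1)).
  have yy := dotp_ge0 y.
  have e0 : 0 < e by rewrite lt_min beta0 divr_gt0 //; lra.
  have ec : e * (dotp y y + 1) <= c.
    rewrite -ler_pdivlMr; last lra.
    by rewrite ge_min lexx orbT.
  have /Hp : C (p + e *: y) by apply: HB; [exact: ltW | rewrite ge_min lexx].
  move/norm2_le.
  rewrite (_ : x - (p + e *: y) = n - e *: y); last by rewrite /n opprD addrA.
  rewrite dotp_expand -/c.
  nra.
have cl : closed [set y | dotp n y <= 0].
  apply: (preimage_closed (f := fun y => dotp n y) (D := [set r : R | r <= 0])).
    by move=> y _; exact: dotp_continuous.
  exact: closed_le.
move=> /(closure_subset sub); rewrite -(closure_id _).1 //= dotpNr.
lra.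
Qed.

End Aux.
Theorem proposition5 (R : realType) (d : nat)
    (C : nat -> set 'rV[R]_d) (ell : nat -> 'rV[R]_d -> R)
    (g : nat -> 'rV[R]_d -> 'rV[R]_d) (L eta : R) (h : nat -> R)
    (theta thetat : nat -> 'rV[R]_d) :
  (forall t, (0 < t)%N -> closed (C t) /\ convex_set (C t)) ->
  (forall t, (0 < t)%N -> convex_fun (ell t)) ->
  (forall t, (0 < t)%N -> subgradient_selection (ell t) (g t)) ->
  (forall t, (0 < t)%N -> lipschitz_loss (ell t) L) ->
  (forall t, (0 < t)%N -> 0 <= h t /\ restorative (ell t) (h t) (fun _ => 0)) ->
  (forall t, (0 < t)%N -> inward_flow (g t) (C t)) ->
  0 < eta ->
  C 1%N (thetat 1%N) ->
  (forall t, (0 < t)%N -> is_projection (C t) (thetat t) (theta t)) ->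
  (forall t, (0 < t)%N -> thetat t.+1 = thetat t - eta *: g t (theta t)) ->
  (forall T, (0 < T)%N ->
     norm2 (thetat T.+1) <=
       Num.sqrt (norm2 (thetat 1%N) ^+ 2 + eta ^+ 2 * L ^+ 2 * T%:R
                 + 2 * eta * L * \sum_(1 <= t < T.+1) h t)) /\
  ((forall s t, (0 < s)%N -> (s <= t)%N -> h s <= h t) ->
     (forall T, (0 < T)%N ->
        norm2 (T%:R^-1 *: \sum_(1 <= t < T.+1) g t (theta t)) <=
          2 * norm2 (thetat 1%N) / (eta * T%:R)
          + Num.sqrt (L ^+ 2 / T%:R + 2 * L * h T / (eta * T%:R)))
     /\
     ((fun t => h t / t%:R) @ \oo --> (0 : R) ->
        (fun T => 2 * norm2 (thetat 1%N) / (eta * T%:R)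
          + Num.sqrt (L ^+ 2 / T%:R + 2 * L * h T / (eta * T%:R))) @ \oo --> (0 : R))).
Proof.
move=> Hcl Hcvx Hsel Hlip Hres Hin eta0 C1 Hproj Hrec.
have gL : forall t, (0 < t)%N -> forall y, norm2 (g t y) <= L.
  by move=> t t0 y; apply: (Hlip t t0); exact: Hsel.
have L0 : 0 <= L by apply: le_trans (gL 1%N isT 0); exact: norm2_ge0.
have step : forall t, (0 < t)%N ->
    - (h t * L) <= dotp (thetat t) (g t (theta t)).
  move=> t t0.
  have N : 0 <= dotp (thetat t - theta t) (g t (theta t)).
    exact: (normal_nonneg (Hproj t t0) (Hin t t0 (theta t))).
  have -> : thetat t = theta t + (thetat t - theta t) by rewrite addrC subrK.
  rewrite dotpDl.
  have [hlt|hge] := ltP (h t) (norm2 (theta t)).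
    have := (Hres t t0).2 _ _ (Hsel t t0 (theta t)) hlt.
    have := (Hres t t0).1; nra.
  have := CS (theta t) (g t (theta t)).
  have := gL t t0 (theta t); have := norm2_ge0 (theta t).
  have := norm2_ge0 (g t (theta t)); have := (Hres t t0).1.
  nra.
have main : forall T, dotp (thetat T.+1) (thetat T.+1) <=
    dotp (thetat 1%N) (thetat 1%N) + eta ^+ 2 * L ^+ 2 * T%:R
    + 2 * eta * L * \sum_(1 <= t < T.+1) h t.
  elim=> [|T IH].
    by rewrite big_geq // mulr0 mulr0 !addr0.
  rewrite Hrec // dotp_expand big_nat_recr //=.
  have -> : T.+1%:R = T%:R + 1 :> R by rewrite natr1.
  have st := step T.+1 isT.
  have ng := gL T.+1 isT (theta T.+1).
  have ng0 := norm2_ge0 (g T.+1 (theta T.+1)).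
  have ng2 : norm2 (g T.+1 (theta T.+1)) ^+ 2 <= L ^+ 2.
    by rewrite ler_pXn2r ?nnegrE.
  have e1 : eta ^+ 2 * norm2 (g T.+1 (theta T.+1)) ^+ 2 <= eta ^+ 2 * L ^+ 2.
    by apply: ler_wpM2l => //; rewrite sqr_ge0.
  have e2 : - (2 * eta * (h T.+1 * L)) <= 2 * eta * dotp (thetat T.+1) (g T.+1 (theta T.+1)).
    rewrite -mulrN; apply: ler_wpM2l => //; apply: mulr_ge0 => //; exact: ltW.
  rewrite -[dotp (g _ _) (g _ _)]norm2_sq.
  move: IH st e1 e2; nra.
have part1 : forall T, (0 < T)%N ->
     norm2 (thetat T.+1) <=
       Num.sqrt (norm2 (thetat 1%N) ^+ 2 + eta ^+ 2 * L ^+ 2 * T%:R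
                 + 2 * eta * L * \sum_(1 <= t < T.+1) h t).
  move=> T T0; rewrite norm2_sq; apply: ler_wsqrtr; exact: main.
split => //.
move=> Hmono; split.
  move=> T T0.
  set a := norm2 (thetat 1%N).
  have a0 : 0 <= a by exact: norm2_ge0.
  have T0r : 0 < T%:R :> R by rewrite ltr0n.
  have hT0 : 0 <= h T := (Hres T T0).1.
  have sumh : \sum_(1 <= t < T.+1) h t <= T%:R * h T.
    rewrite (_ : T%:R * h T = \sum_(1 <= t < T.+1) h T); last first.
      by rewrite sumr_const_nat subSS subn0 mulr_natl.
    apply: ler_sum_nat => i /andP [i1 iT].
    by apply: Hmono.
  set B := eta ^+ 2 * L ^+ 2 * T%:R + 2 * eta * L * (T%:R * h T).
  have B0 : 0 <= B.
    rewrite /B; apply: addr_ge0; first by rewrite !mulr_ge0 // ltW.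
    by rewrite !mulr_ge0 // ltW.
  have n1 : norm2 (thetat T.+1) <= a + Num.sqrt B.
    apply: (le_trans (part1 T T0)).
    have -> : a + Num.sqrt B = Num.sqrt ((a + Num.sqrt B) ^+ 2).
      by rewrite sqrtr_sqr ger0_norm // addr_ge0 // sqrtr_ge0.
    apply: ler_wsqrtr.
    have H : 2 * eta * L * \sum_(1 <= t < T.+1) h t <= 2 * eta * L * (T%:R * h T).
      by apply: ler_wpM2l => //; rewrite !mulr_ge0 // ltW.
    move: (sqrtr_ge0 B) (sqr_sqrtr B0); rewrite -/a.
    move: (Num.sqrt B) => s s0 sB.
    rewrite /B in sB; nra.
  have sumE : forall T, eta *: \sum_(1 <= t < T.+1) g t (theta t) = thetat 1%N - thetat T.+1.
    elim=> [|k IH]; first by rewrite big_geq // scaler0 subrr.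
    rewrite big_nat_recr //= scalerDr IH (Hrec k.+1) //.
    by rewrite opprD opprK addrA.
  have etaT : 0 < eta * T%:R by rewrite mulr_gt0.
  have -> : T%:R^-1 *: \sum_(1 <= t < T.+1) g t (theta t)
      = (eta * T%:R)^-1 *: (thetat 1%N - thetat T.+1).
    rewrite -sumE scalerA invfM; congr (_ *: _).
    by rewrite mulrAC mulVf ?gt_eqF // mul1r.
  rewrite norm2Z ger0_norm; last by rewrite invr_ge0 ltW.
  apply: (le_trans (ler_wpM2l _ (norm2_tri _ _))); first by rewrite invr_ge0 ltW.
  rewrite -/a.
  apply: (le_trans (ler_wpM2l _ (lerD (lexx a) n1))); first by rewrite invr_ge0 ltW.
  have -> : Num.sqrt (L ^+ 2 / T%:R + 2 * L * h T / (eta * T%:R))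
        = Num.sqrt B * (eta * T%:R)^-1.
    have -> : L ^+ 2 / T%:R + 2 * L * h T / (eta * T%:R) = B * ((eta * T%:R)^-1) ^+ 2.
      by rewrite /B; field; rewrite ?gt_eqF.
    by rewrite sqrtrM // sqrtr_sqr ger0_norm // invr_ge0 ltW.
  rewrite le_eqVlt; apply/orP; left; apply/eqP; ring.
move=> Hlim.
set a := norm2 (thetat 1%N).
have -> : (fun T : nat => 2 * a / (eta * T%:R)
          + Num.sqrt (L ^+ 2 / T%:R + 2 * L * h T / (eta * T%:R))) =
    (fun T : nat => T%:R^-1 * (2 * a / eta)
          + Num.sqrt (T%:R^-1 * L ^+ 2 + h T / T%:R * (2 * L / eta))).
  apply: funext => T; rewrite !invfM.
  congr (_ + Num.sqrt _); ring.
have h1 : (fun T : nat => T%:R^-1 : R) @ \oo --> 0.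
  rewrite -cvg_shiftS; exact: cvg_harmonic.
have : (fun T : nat => T%:R^-1 * (2 * a / eta)
          + Num.sqrt (T%:R^-1 * L ^+ 2 + h T / T%:R * (2 * L / eta))) @ \oo -->
       0 * (2 * a / eta) + Num.sqrt (0 * L ^+ 2 + 0 * (2 * L / eta)).
  apply: cvgD; first exact: cvgMr_tmp.
  apply: (continuous_cvg _ (h := Num.sqrt)); first exact: sqrt_continuous.
  by apply: cvgD; apply: cvgMr_tmp.
by rewrite !mul0r addr0 sqrtr0 addr0.
Qed.
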